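(* Let $G$ be a group and $A\subseteq G$ a nonempty finite set. Suppose $H$ is a finite subgroup of $G$ such that $H\subseteq\operatorname{Stab}^r_N(A)$ for some $N>0$. Then there is a set $D\subseteq G$ which is a union of left cosets of $H$ such that $|A\triangle D|\leq N$.
   Context: $\operatorname{Stab}^r_N(A)=\{x\in G:|Ax\triangle A|\leq N\}$, where $\triangle$ denotes symmetric difference. *)

(* Defs.v *)
(* G is an arbitrary (possibly infinite) group, modelled by
   MathComp's [groupType] (boot/monoid.v).  Subsets of G are predicates
   [G -> Prop]. *)
From mathcomp Require Import all_boot monoid.
Set Implicit Arguments. Unset Strict Implicit. Unset Printing Implicit Defensive.

Local Open Scope group_scope.
Local Notation "x * y" := (monoid.mul x y) : group_scope.
Local Notation "1" := (@monoid.one _) : group_scope.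
Local Notation "x ^-1" := (monoid.inv x) : group_scope.

Section Defs.
Variable G : groupType.

Definition finite_set (S : G -> Prop) : Prop :=
  exists l : seq G, forall x, S x <-> x \in l.

Definition card_le (S : G -> Prop) (N : nat) : Prop :=
  exists l : seq G, (size l <= N)%N /\ forall x, S x -> x \in l.

Definition symdiff (A B : G -> Prop) : G -> Prop :=
  fun x => (A x /\ ~ B x) \/ (B x /\ ~ A x).

Definition rtrans (A : G -> Prop) (x : G) : G -> Prop :=
  fun y => exists a, A a /\ y = a * x.

Definition StabR (N : nat) (A : G -> Prop) : G -> Prop :=
  fun x => card_le (symdiff (rtrans A x) A) N.

Definition is_subgroup (H : G -> Prop) : Prop :=
  H 1 /\ forall x y, H x -> H y -> H (x * y^-1).

Definition union_left_cosets (H D : G -> Prop) : Prop :=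
  exists S : G -> Prop,
    forall x, D x <-> exists g h, S g /\ H h /\ x = g * h.

End Defs.

(* Main.v *)
Require Import Defs.
From mathcomp Require Import all_boot.
From mathcomp Require Import zify.

Local Notation "x ** y" := (monoid.mul x y) (at level 40, left associativity).
Local Notation ginv := monoid.inv.
Local Notation g1 := monoid.one.

Lemma perm_map_closed (T : eqType) (s : seq T) (f : T -> T) :
  uniq s -> injective f -> (forall x, x \in s -> f x \in s) ->
  perm_eq s (map f s).
Proof.
move=> us fi cl.
have um : uniq (map f s) by rewrite map_inj_uniq.
have sub : {subset map f s <= s} by move=> y /mapP [x xs ->]; exact: cl.
have [_ e] := uniq_min_size um sub (eq_leq (esym (size_map f s))).
by apply: uniq_perm => // y; rewrite e.
Qed.

Lemma count_sumE (T : Type) (a : pred T) (s : seq T) :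
  count a s = \sum_(x <- s) (a x : nat).
Proof. by elim: s => [|x s IH]; rewrite ?big_nil ?big_cons //= IH. Qed.

Theorem lemma6p2 (G : groupType) (A H : G -> Prop) (N : nat) :
  (exists a, A a) -> finite_set A ->
  is_subgroup H -> finite_set H ->
  (0 < N)%N ->
  (forall x, H x -> StabR N A x) ->
  exists D : G -> Prop, union_left_cosets H D /\ card_le (symdiff A D) N.
Proof.
move=> _ [lA0 hA0] [H1 Hsub] [lH0 hH0] _ hst.
pose lA := undup lA0. pose lH := undup lH0.
have hA : forall x, A x <-> x \in lA by move=> x; rewrite mem_undup.
have hH : forall x, H x <-> x \in lH by move=> x; rewrite mem_undup.
have uH : uniq lH by exact: undup_uniq.
clearbody lA lH; clear hA0 hH0 lA0 lH0.
have Hinv : forall h, h \in lH -> ginv h \in lH.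
  move=> h /hH hh; apply/hH.
  by have := Hsub _ _ H1 hh; rewrite monoid.mul1g.
have Hmul : forall h h', h \in lH -> h' \in lH -> h ** h' \in lH.
  move=> h h' /hH hh /Hinv /hH hh'; apply/hH.
  by have := Hsub _ _ hh hh'; rewrite monoid.invgK.
have H1' : g1 \in lH by apply/hH.
pose m := size lH.
have m0 : (0 < m)%N by rewrite /m; case: (lH) H1'.
pose c y := count (fun h => y ** h \in lA) lH.
have cm : forall y, (c y <= m)%N by move=> y; exact: count_size.
pose D y : bool := (m < 2 * c y)%N.
pose U := undup [seq a ** h | a <- lA, h <- lH].
have uU : uniq U by exact: undup_uniq.
have UH : forall y h, y \in U -> h \in lH -> y ** h \in U.
  move=> y h; rewrite mem_undup => /allpairsP [[a h'] [/= ha hh' ->]] hh.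
  rewrite mem_undup; apply/allpairsP; exists (a, h' ** h); split => //=.
    exact: Hmul.
  by rewrite monoid.mulgA.
have AU : forall y, y \in lA -> y \in U.
  move=> y ya; rewrite mem_undup; apply/allpairsP; exists (y, g1); split => //=.
  by rewrite monoid.mulg1.
have permU : forall h, h \in lH -> perm_eq U (map (fun y => y ** h) U).
  move=> h hh; apply: perm_map_closed => //; last by move=> y yU; exact: UH.
  exact: monoid.mulIg.
have permHl : forall h, h \in lH -> perm_eq lH (map (fun h' => h ** h') lH).
  move=> h hh; apply: perm_map_closed => //; last by move=> y yH; exact: Hmul.
  exact: monoid.mulgI.
have permHinv : perm_eq lH (map ginv lH).
  apply: perm_map_closed => //; exact: monoid.invg_inj.
have cinv : forall y h, h \in lH -> c (y ** h) = c y.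
  move=> y h hh; rewrite /c [in RHS](permP (permHl h hh)) count_map.
  by apply: eq_count => h' /=; rewrite monoid.mulgA.
have Dinv : forall y h, h \in lH -> D (y ** h) = D y.
  by move=> y h hh; rewrite /D cinv.
have cinv2 : forall y, count (fun x => y ** ginv x \in lA) lH = c y.
  move=> y; rewrite (permP permHinv) count_map.
  by apply: eq_count => x /=; rewrite monoid.invgK.
have sumC : forall (s : seq G) K, \sum_(x <- s) K = K * size s.
  move=> s K; elim: s => [|x s IH]; first by rewrite big_nil muln0.
  by rewrite big_cons IH /= mulnS.
have avg : forall F : G -> nat,
    \sum_(y <- U) m * F y = \sum_(y <- U) \sum_(h <- lH) F (y ** h).
  move=> F; rewrite exchange_big /=.
  transitivity (\sum_(h <- lH) \sum_(y <- U) F y).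
    by rewrite sumC -big_distrr /= mulnC.
  apply: eq_big_seq => h hh.
  by rewrite (perm_big _ (permU h hh)) big_map.
have avgX : forall (P : pred G) (X : G -> nat),
    (forall y h, h \in lH -> X (y ** h) = X y) ->
    \sum_(y <- U) m * (P y * X y) = \sum_(y <- U) count (fun h => P (y ** h)) lH * X y.
  move=> P X XI; rewrite avg; apply: eq_bigr => y _.
  rewrite count_sumE big_distrl /=; apply: eq_big_seq => h hh.
  by rewrite XI.
have hx : forall x, x \in lH ->
    (count (fun y => (y ** ginv x \in lA) != (y \in lA)) U <= N)%N.
  move=> x hxH; have [l [sl cov]] := hst x (proj2 (hH x) hxH).
  rewrite -size_filter; apply: leq_trans sl; apply: uniq_leq_size.
    exact: filter_uniq.
  move=> y; rewrite mem_filter => /andP [p _]; apply: cov; rewrite /symdiff /rtrans.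
  case e: (y ** ginv x \in lA) p; case ya: (y \in lA) => //= _.
    left; split; last by move/hA; rewrite ya.
    exists (y ** ginv x); split; first exact/hA.
    by rewrite monoid.mulgVK.
  right; split; first exact/hA.
  move=> [a [/hA aA ey]]; move: e; rewrite ey monoid.mulgK aA //.
pose f y := (y \in lA) * (m - c y) + (~~ (y \in lA)) * c y.
have hsum : (\sum_(y <- U) f y <= m * N)%N.
  have -> : \sum_(y <- U) f y =
      \sum_(x <- lH) count (fun y => (y ** ginv x \in lA) != (y \in lA)) U.
    under [in RHS]eq_bigr do rewrite count_sumE.
    rewrite exchange_big /=; apply: eq_bigr => y _.
    transitivity (count (fun x => (y ** ginv x \in lA) != (y \in lA)) lH);
      last by rewrite count_sumE.
    rewrite /f; case ya: (y \in lA) => /=.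
      rewrite mul1n mul0n addn0 -cinv2 /m -(count_predC (fun x => y ** ginv x \in lA) lH) addKn.
      by apply: eq_count => x /=; case: (_ \in lA).
    rewrite mul0n mul1n add0n -cinv2.
    by apply: eq_count => x /=; case: (_ \in lA).
  rewrite big_seq; apply: (@leq_trans (\sum_(x <- lH | x \in lH) N)).
    by apply: leq_sum => x hxH; exact: hx.
  by rewrite -big_seq sumC mulnC.
have mf : m * \sum_(y <- U) f y = \sum_(y <- U) (c y * (m - c y) + (m - c y) * c y).
  rewrite big_distrr /=.
  under eq_bigr do rewrite mulnDr.
  rewrite big_split /=.
  rewrite (avgX (fun y => y \in lA) (fun y => m - c y)); last first.
    by move=> y h hh; rewrite cinv.
  rewrite (avgX (fun y => ~~ (y \in lA)) c); last exact: cinv.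
  rewrite -big_split /=; apply: eq_bigr => y _; congr (_ * _ + _ * _).
  by rewrite /m /c -(count_predC (fun h => y ** h \in lA) lH) addKn.
pose LHS := count (fun y => (y \in lA) != D y) U.
have mL : m * LHS = \sum_(y <- U) (c y * ~~ D y + (m - c y) * D y).
  rewrite /LHS count_sumE big_distrr /=.
  transitivity (\sum_(y <- U) (m * ((y \in lA) * ~~ D y) + m * (~~ (y \in lA) * D y))).
    apply: eq_bigr => y _.
    by case: (y \in lA); case: (D y); rewrite /= ?muln0 ?muln1 ?addn0.
  rewrite big_split /=.
  rewrite (avgX (fun y => y \in lA) (fun y => ~~ D y : nat)); last first.
    by move=> y h hh; rewrite Dinv.
  rewrite (avgX (fun y => ~~ (y \in lA)) (fun y => D y : nat)); last first.
    by move=> y h hh; rewrite Dinv.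
  rewrite -big_split /=; apply: eq_bigr => y _; congr (_ * _ + _ * _).
  by rewrite /m /c -(count_predC (fun h => y ** h \in lA) lH) addKn.
have LN : (LHS <= N)%N.
  have : (m * (m * LHS) <= m * (m * N))%N.
    rewrite mL big_distrr /=; apply: leq_trans (_ : _ <= m * \sum_(y <- U) f y)%N _.
      rewrite mf; apply: leq_sum => y _.
      have := cm y; rewrite /D; case: ltnP => h /=; nia.
    by rewrite leq_pmul2l.
  by rewrite !leq_pmul2l.
exists (fun y => D y); split.
  exists (fun y => D y) => x; split.
    by move=> Dx; exists x, g1; split; [exact: Dx | split; [exact: H1 | rewrite monoid.mulg1]].
  by move=> [g [h [Dg [/hH hh ->]]]]; rewrite Dinv.
exists (filter (fun y => (y \in lA) != D y) U); split.
  by rewrite size_filter.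
move=> y [[/hA ya nD] | [Dy nA]]; rewrite mem_filter.
  have -> : D y = false by apply/negbTE/negP.
  by rewrite ya AU.
have ya : (y \in lA) = false by apply/negbTE; apply/negP => /hA.
rewrite ya Dy /=.
have : (0 < c y)%N by move: Dy; rewrite /D; lia.
rewrite -has_count => /hasP [h hh yh].
have -> : y = (y ** h) ** ginv h by rewrite monoid.mulgK.
by apply: UH; [exact: AU | exact: Hinv].
Qed.
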